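(* For every realization, the balanced oracle $m^{\mathfrak b}=\inf\{m\ge0:b_m^2\le s_m\}$ satisfies \[\|\widehat F^{(m^{\mathfrak b})}-f^*\|_n^2\le 2\|\widehat F^{(m^{\mathfrak o})}-f^*\|_n^2+\Delta(s_{m^{\mathfrak b}})=2\min_{m\ge0}\|\widehat F^{(m)}-f^*\|_n^2+\Delta(s_{m^{\mathfrak b}}),\] where $m^{\mathfrak o}\in\arg\min_{m\ge0}\|\widehat F^{(m)}-f^*\|_n^2$ and $\Delta(s_m)=s_m-s_{m-1}$ (with $s_{-1}:=0$).
   Context: Let $Y=f^*+\varepsilon\in\mathbb R^n$ with $f^*,\varepsilon\in\mathbb R^n$, and let $\mathbf X\in\mathbb R^{n\times p}$ have rank $n$ with columns $X^{(j)}$. $\langle a,b\rangle_n=n^{-1}\sum_ia_ib_i$, $\|\cdot\|_n$ its norm. $\widehat\Pi_J$: $\langle\cdot,\cdot\rangle_n$-orthogonal projection onto $\mathrm{span}\{X^{(j)}:j\in J\}$. OMP: $\widehat F^{(0)}=0,\widehat J_0=\emptyset$, $\widehat j_{m+1}\in\arg\max_j|\langle Y-\widehat F^{(m)},X^{(j)}/\|X^{(j)}\|_n\rangle_n|$, $\widehat J_{m+1}=\widehat J_m\cup\{\widehat j_{m+1}\}$, $\widehat F^{(m+1)}=\widehat\Pi_{\widehat J_{m+1}}Y$; $\widehat\Pi_m=\widehat\Pi_{\widehat J_m}$, $b_m^2=\|(I-\widehat\Pi_m)f^*\|_n^2$, $s_m=\|\widehat\Pi_m\varepsilon\|_n^2$,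 so that $\|\widehat F^{(m)}-f^*\|_n^2=b_m^2+s_m$. *)

(* Defs.v *)
From HB Require Import structures.
From mathcomp Require Import all_boot all_order all_algebra.
From mathcomp Require Import reals.
Set Implicit Arguments. Unset Strict Implicit. Unset Printing Implicit Defensive.
Import Order.TTheory GRing.Theory Num.Theory.
Local Open Scope ring_scope.

Section OMP.
Variables (R : realType) (n p : nat).

Definition ipn (a b : 'cV[R]_n) : R := n%:R^-1 * \sum_(i < n) a i 0 * b i 0.

Definition nrm2 (a : 'cV[R]_n) : R := ipn a a.

Definition nrm (a : 'cV[R]_n) : R := Num.sqrt (nrm2 a).

Definition is_proj (X : 'M[R]_(n, p)) (J : {set 'I_p}) (a v : 'cV[R]_n) : Prop :=
  (exists c : 'I_p -> R, v = \sum_(j in J) c j *: col j X) /\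
  (forall j, j \in J -> ipn (a - v) (col j X) = 0).

Definition ncol (X : 'M[R]_(n, p)) (j : 'I_p) : 'cV[R]_n := (nrm (col j X))^-1 *: col j X.

(* (J, Pi) is an OMP run on data (X, Y): Pi m is the projection onto
   span{X^(j) : j in J m} (so F^(m) = Pi m Y), J 0 = empty, and J (m+1)
   adds a maximiser of |<Y - F^(m), X^(j)/||X^(j)||_n>_n|. *)
Definition omp_run (X : 'M[R]_(n, p)) (Y : 'cV[R]_n)
    (J : nat -> {set 'I_p}) (Pi : nat -> 'cV[R]_n -> 'cV[R]_n) : Prop :=
  [/\ J 0%N = set0,
      (forall m a, is_proj X (J m) a (Pi m a)) &
      (forall m, exists j : 'I_p,
          (forall k : 'I_p, `|ipn (Y - Pi m Y) (ncol X k)| <= `|ipn (Y - Pi m Y) (ncol X j)|)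
          /\ J m.+1 = j |: J m)].

End OMP.

(* Main.v *)
Require Import Defs.
From HB Require Import structures.
From mathcomp Require Import all_boot all_order all_algebra.
From mathcomp Require Import reals.
From mathcomp Require Import ring.
Import Order.TTheory GRing.Theory Num.Theory.
Local Open Scope ring_scope.
Set Implicit Arguments. Unset Strict Implicit.

Section Helpers.
Variables (R : realType) (n p : nat) (X : 'M[R]_(n, p)).

Lemma ipnDl (a b c : 'cV[R]_n) : ipn (a + b) c = ipn a c + ipn b c.
Proof.
rewrite /ipn -mulrDr; congr (_ * _); rewrite -big_split /=.
by apply: eq_bigr => i _; rewrite mxE mulrDl.
Qed.

Lemma ipnZl (k : R) (a c : 'cV[R]_n) : ipn (k *: a) c = k * ipn a c.
Proof.
rewrite /ipn mulrCA; congr (_ * _); rewrite mulr_sumr.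
by apply: eq_bigr => i _; rewrite mxE mulrA.
Qed.

Lemma ipnC (a b : 'cV[R]_n) : ipn a b = ipn b a.
Proof. by rewrite /ipn; congr (_ * _); apply: eq_bigr => i _; rewrite mulrC. Qed.

Lemma ipn0l (c : 'cV[R]_n) : ipn 0 c = 0.
Proof. by rewrite -(scale0r 0) ipnZl mul0r. Qed.

Lemma ipnNl (a c : 'cV[R]_n) : ipn (- a) c = - ipn a c.
Proof. by rewrite -scaleN1r ipnZl mulN1r. Qed.

Lemma ipnBl (a b c : 'cV[R]_n) : ipn (a - b) c = ipn a c - ipn b c.
Proof. by rewrite ipnDl ipnNl. Qed.

Lemma ipnDr (a b c : 'cV[R]_n) : ipn c (a + b) = ipn c a + ipn c b.
Proof. by rewrite ipnC ipnDl ![ipn _ c]ipnC. Qed.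

Lemma ipnBr (a b c : 'cV[R]_n) : ipn c (a - b) = ipn c a - ipn c b.
Proof. by rewrite ipnC ipnBl ![ipn _ c]ipnC. Qed.

Lemma nrm2_ge0 (a : 'cV[R]_n) : 0 <= nrm2 a.
Proof.
rewrite /nrm2 /ipn mulr_ge0 ?invr_ge0 ?ler0n //.
by apply: sumr_ge0 => i _; rewrite -expr2 sqr_ge0.
Qed.

Lemma nrm2_eq0 (a : 'cV[R]_n) : nrm2 a = 0 -> a = 0.
Proof.
have sqr_ge0' : forall (m : nat) (b : 'cV[R]_m) l, 0 <= b l 0 * b l 0.
  by move=> m b l; rewrite -expr2 sqr_ge0.
case: n a => [|k] a H; apply/matrixP => i j; first by case: i.
rewrite (ord1 j) mxE.
move: H; rewrite /nrm2 /ipn => /eqP; rewrite mulf_eq0 invr_eq0 pnatr_eq0 /=.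
move/eqP/psumr_eq0P => H.
have /eqP := H (fun l _ => sqr_ge0' _ a l) i isT.
by rewrite mulf_eq0 orbb => /eqP.
Qed.

Lemma nrm2D (a b : 'cV[R]_n) : nrm2 (a + b) = nrm2 a + nrm2 b + 2 * ipn a b.
Proof.
rewrite /nrm2 ipnDl !ipnDr [ipn b a]ipnC; ring.
Qed.

Lemma nrm2B (a b : 'cV[R]_n) : nrm2 (a - b) = nrm2 a + nrm2 b - 2 * ipn a b.
Proof.
rewrite /nrm2 !ipnBl !ipnBr [ipn b a]ipnC; ring.
Qed.

Definition orth (K : {set 'I_p}) (w : 'cV[R]_n) :=
  forall j, j \in K -> ipn w (col j X) = 0.
Definition spn (K : {set 'I_p}) (v : 'cV[R]_n) :=
  exists c : 'I_p -> R, v = \sum_(j in K) c j *: col j X.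

Lemma span_orth K v w : spn K v -> orth K w -> ipn v w = 0.
Proof.
move=> [c ->] Hw.
rewrite (big_morph (fun a => ipn a w) (fun a b => ipnDl a b w) (ipn0l w)).
by apply: big1 => j jK; rewrite ipnZl ipnC Hw // mulr0.
Qed.

Lemma orth_sub (K K' : {set 'I_p}) w : K \subset K' -> orth K' w -> orth K w.
Proof. by move=> /subsetP sK H j jK; apply: H; apply: sK. Qed.

Lemma orthB K a b : orth K a -> orth K b -> orth K (a - b).
Proof. by move=> Ha Hb j jK; rewrite ipnBl Ha // Hb // subr0. Qed.

Lemma orthD K a b : orth K a -> orth K b -> orth K (a + b).
Proof. by move=> Ha Hb j jK; rewrite ipnDl Ha // Hb // addr0. Qed.

Lemma spanB K u v : spn K u -> spn K v -> spn K (u - v).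
Proof.
move=> [c ->] [d ->]; exists (fun j => c j - d j).
rewrite -sumrB; apply: eq_bigr => j _; by rewrite scalerBl.
Qed.

Lemma spanD K u v : spn K u -> spn K v -> spn K (u + v).
Proof.
move=> [c ->] [d ->]; exists (fun j => c j + d j).
rewrite -big_split; apply: eq_bigr => j _; by rewrite scalerDl.
Qed.

Lemma proj_uniq K a v v' : is_proj X K a v -> is_proj X K a v' -> v = v'.
Proof.
move=> [sv ov] [sv' ov'].
have sd : spn K (v - v') by apply: spanB.
have od : orth K (v - v').
  have -> : v - v' = (a - v') - (a - v) by rewrite opprB [RHS]addrC [RHS]addrA subrK.
  exact: orthB.
apply/eqP; rewrite -subr_eq0; apply/eqP/nrm2_eq0.
exact: span_orth sd od.
Qed.

Lemma proj_add K a b va vb : is_proj X K a va -> is_proj X K b vb ->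
  is_proj X K (a + b) (va + vb).
Proof.
move=> [sa oa] [sb ob]; split; first exact: spanD.
have -> : a + b - (va + vb) = (a - va) + (b - vb).
  by rewrite opprD addrACA.
exact: orthD.
Qed.

End Helpers.

Theorem lemma2p1 (R : realType) (n p : nat) (X : 'M[R]_(n, p))
  (fstar eps : 'cV[R]_n)
  (J : nat -> {set 'I_p}) (Pi : nat -> 'cV[R]_n -> 'cV[R]_n) :
  \rank X = n ->
  omp_run X (fstar + eps) J Pi ->
  let b2 := fun m => nrm2 (fstar - Pi m fstar) in
  let s := fun m => nrm2 (Pi m eps) in
  let risk := fun m => nrm2 (Pi m (fstar + eps) - fstar) in
  let Delta := fun m => s m - (if m is k.+1 then s k else 0) in
  forall mb : nat,
    b2 mb <= s mb ->
    (forall m, (m < mb)%N -> ~ (b2 m <= s m)) ->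
  forall mo : nat,
    (forall m, risk mo <= risk m) ->
    risk mb <= 2 * risk mo + Delta mb.
Proof.
move=> _ [J0 hproj hstep] b2 s risk Delta mb hb hlt mo hmo.
have sub m : J m \subset J m.+1.
  by have [j [_ ->]] := hstep m; apply: subsetUr.
have risk_eq m : risk m = b2 m + s m.
  rewrite /risk /b2 /s.
  have -> : Pi m (fstar + eps) = Pi m fstar + Pi m eps.
    apply: (proj_uniq (hproj m _)); apply: proj_add; exact: hproj.
  have -> : Pi m fstar + Pi m eps - fstar = Pi m eps - (fstar - Pi m fstar).
    by rewrite opprB addrA [Pi m eps + _]addrC.
  rewrite nrm2B.
  have [sp _] := hproj m eps; have [_ op] := hproj m fstar.
  by rewrite (span_orth sp op) mulr0 subr0 addrC.
have b2_step m : b2 m.+1 <= b2 m.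
  rewrite /b2.
  have -> : fstar - Pi m fstar = (fstar - Pi m.+1 fstar) + (Pi m.+1 fstar - Pi m fstar).
    by rewrite addrA subrK.
  rewrite [in X in _ <= X]nrm2D.
  have [s1 o1] := hproj m.+1 fstar; have [s0 _] := hproj m fstar.
  rewrite ipnBr; set T := ipn _ (Pi m.+1 fstar); have -> : T = 0 by rewrite /T ipnC (span_orth s1 o1).
  rewrite ipnC (span_orth s0 (orth_sub (sub m) o1)) subr0 mulr0 addr0.
  by rewrite lerDl nrm2_ge0.
have s_step m : s m <= s m.+1.
  rewrite /s.
  have -> : Pi m.+1 eps = Pi m eps + (Pi m.+1 eps - Pi m eps) by rewrite addrC subrK.
  rewrite nrm2D.
  have [s1 o1] := hproj m.+1 eps; have [s0 o0] := hproj m eps.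
  have od : orth X (J m) (Pi m.+1 eps - Pi m eps).
    have -> : Pi m.+1 eps - Pi m eps = (eps - Pi m eps) - (eps - Pi m.+1 eps).
      by rewrite opprB [RHS]addrC [RHS]addrA subrK.
    apply: orthB => //; exact: orth_sub (sub m) o1.
  by rewrite (span_orth s0 od) mulr0 addr0 lerDl nrm2_ge0.
have b2_mono m k : (m <= k)%N -> b2 k <= b2 m.
  elim: k => [|k IH]; first by rewrite leqn0 => /eqP ->.
  rewrite leq_eqVlt => /orP [/eqP -> //|]; rewrite ltnS => /IH.
  exact: le_trans (b2_step k).
have s_mono m k : (m <= k)%N -> s m <= s k.
  elim: k => [|k IH]; first by rewrite leqn0 => /eqP ->.
  rewrite leq_eqVlt => /orP [/eqP -> //|]; rewrite ltnS => /IH.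
  move=> h; exact: le_trans h (s_step k).
have b2_ge0 m : 0 <= b2 m by apply: nrm2_ge0.
have s_ge0 m : 0 <= s m by apply: nrm2_ge0.
case: (leqP mb mo) => hm.
  rewrite risk_eq.
  have h1 : s mb <= risk mo by rewrite risk_eq (le_trans (s_mono _ _ hm)) // lerDr.
  have hD : 0 <= Delta mb.
    rewrite /Delta; case: mb hb hlt hm h1 => [|k] *; first by rewrite subr0.
    by rewrite subr_ge0 s_step.
  rewrite -[b2 mb + s mb]addr0 lerD //.
  by rewrite mulr2n mulrDl mul1r lerD // (le_trans hb).
case: mb hb hlt hm => [//|k] hb hlt hm.
have hk : s k < b2 k by rewrite ltNge; apply/negP/hlt.
have hbk : b2 k <= risk mo.
  by rewrite risk_eq (le_trans (b2_mono _ _ (hm : (mo <= k)%N))) // lerDl.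
rewrite risk_eq /Delta.
have -> : b2 k.+1 + s k.+1 = b2 k.+1 + s k + (s k.+1 - s k) by rewrite -addrA [s k + _]addrC subrK.
rewrite lerD2r mulr2n mulrDl mul1r lerD //; first exact: le_trans (b2_step k) hbk.
exact: le_trans (ltW hk) hbk.
Qed.
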